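(* Let $\gamma>0$, $v\in[0,1]^N$, $r\in[0,1]^N$, and let $$q\in\arg\max_{\rho\in\Delta(\mathcal{S})}\;\mathbb{E}_{S\sim\rho}[R(S,v,r)]-\frac{(K+1)^4}{\gamma}\sum_{i=1}^N\log\frac{1}{w_i(\rho)}.$$ Then there is an absolute constant $C>0$ (independent of $N,K,\gamma,v,r$) such that $\mathsf{dec}_\gamma(q;v,r)\le \frac{C\,NK^4}{\gamma}$.
   Context: $N\ge K\ge1$ are integers and $\mathcal{S}$ is the collection of subsets $S\subseteq[N]$ with $1\le|S|\le K$; $\Delta(\mathcal{S})$ is the set of probability distributions on $\mathcal{S}$. For $S\in\mathcal{S}$ and $v\in[0,1]^N$, $\mu(S,v)\in\mathbb{R}^{N+1}$ is the distribution on $\{0,\dots,N\}$ with $\mu_i(S,v)=\frac{v_i}{1+\sum_{j\in S}v_j}$ for $i\in S$, $\mu_0(S,v)=\frac{1}{1+\sum_{j\in S}v_j}$, and $\mu_i(S,v)=0$ otherwise. $R(S,v,r)=\frac{\sum_{i\in S}r_iv_i}{1+\sum_{i\in S}v_i}$. For $\rho\in\Delta(\mathcal{S})$, $w_i(\rho)=\sum_{S\ni i}\rho(S)$. The Decision-Estimation Coefficient of $q\in\Delta(\mathcal{S})$ is $$\mathsf{dec}_\gamma(q;v,r)=\max_{v^\star\in[0,1]^N}\max_{S^\star\in\mathcal{S}}\Big\{R(S^\star,v^\star,r)-\mathbb{E}_{S\sim q}[R(S,v^\star,r)]-\gamma\,\mathbb{E}_{S\sim q}\big[\|\mu(S,v)-\mu(S,v^\star)\|_2^2\big]\Big\}.$$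 *)

(* Defs.v *)
From HB Require Import structures.
From mathcomp Require Import all_boot all_order all_algebra.
From mathcomp Require Import boolp classical_sets reals constructive_ereal ereal exp.
Set Implicit Arguments. Unset Strict Implicit. Unset Printing Implicit Defensive.
Import Order.TTheory GRing.Theory Num.Theory.
Local Open Scope ring_scope.

Section MNL.
Variable R : realType.
Variables N K : nat.

(* [N] is represented by 'I_N; the collection \mathcal S of assortments *)
Definition assortment (S : {set 'I_N}) : bool := (1 <= #|S| <= K)%N.

(* Delta(\mathcal S): probability distributions on \mathcal S, as functions
   on all subsets, vanishing off \mathcal S *)
Definition is_dist (rho : {set 'I_N} -> R) : Prop :=
  (forall S, 0 <= rho S) /\ (forall S, ~~ assortment S -> rho S = 0) /\
  \sum_(S | assortment S) rho S = 1.

Definition expect (rho : {set 'I_N} -> R) (f : {set 'I_N} -> R) : R :=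
  \sum_(S | assortment S) rho S * f S.

(* mu(S,v) in R^{N+1}; coordinate None is the outside option 0,
   coordinate Some i is item i *)
Definition mu (S : {set 'I_N}) (v : 'I_N -> R) (j : option 'I_N) : R :=
  match j with
  | None => 1 / (1 + \sum_(k in S) v k)
  | Some i => if i \in S then v i / (1 + \sum_(k in S) v k) else 0
  end.

Definition sqdist_mu (S : {set 'I_N}) (v v' : 'I_N -> R) : R :=
  \sum_(j : option 'I_N) (mu S v j - mu S v' j) ^+ 2.

Definition Rev (S : {set 'I_N}) (v r : 'I_N -> R) : R :=
  (\sum_(i in S) r i * v i) / (1 + \sum_(i in S) v i).

Definition w (rho : {set 'I_N} -> R) (i : 'I_N) : R :=
  \sum_(S | assortment S && (i \in S)) rho S.

Definition in_unit_cube (v : 'I_N -> R) : Prop := forall i, 0 <= v i <= 1.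

(* The regularized objective, valued in extended reals: -oo when some
   w_i(rho) = 0 (since log(1/0) = +oo). *)
Definition objective (gamma : R) (v r : 'I_N -> R) (rho : {set 'I_N} -> R)
  : \bar R :=
  if `[< forall i, 0 < w rho i >] then
    (expect rho (fun S => Rev S v r)
     - (K.+1%:R ^+ 4 / gamma) * \sum_(i < N) ln (1 / w rho i))%:E
  else -oo%E.

Definition is_argmax_objective (gamma : R) (v r : 'I_N -> R)
  (q : {set 'I_N} -> R) : Prop :=
  is_dist q /\
  forall rho, is_dist rho -> (objective gamma v r rho <= objective gamma v r q)%E.

(* The Decision-Estimation Coefficient (the max is written as a sup) *)
Definition dec (gamma : R) (q : {set 'I_N} -> R) (v r : 'I_N -> R) : R :=
  sup [set x : R | exists (vs : 'I_N -> R) (Ss : {set 'I_N}),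
         [/\ in_unit_cube vs, assortment Ss &
         x = Rev Ss vs r - expect q (fun S => Rev S vs r)
             - gamma * expect q (fun S => sqdist_mu S v vs)]].

End MNL.

(* Main.v *)
Require Import Defs.
From HB Require Import structures.
From mathcomp Require Import all_boot all_order all_algebra.
From mathcomp Require Import boolp classical_sets reals constructive_ereal ereal exp.
From mathcomp Require Import ring lra.
Import Order.TTheory GRing.Theory Num.Theory.
Local Open Scope ring_scope.
Set Implicit Arguments. Unset Strict Implicit. Unset Printing Implicit Defensive.

Ltac nz := repeat (apply/andP; split); apply/negP => /eqP; lra.

Lemma sum_option (R : realType) (N : nat) (f : option 'I_N -> R) :
  \sum_(o : option 'I_N) f o = f None + \sum_(i : 'I_N) f (Some i).
Proof.
rewrite (bigD1 None) //=; congr (_ + _).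
rewrite (reindex_omap Some (fun o => o)) //=.
  by apply: eq_bigl => j; rewrite eqxx.
by case.
Qed.


Lemma sum_pick (R : realType) (N : nat) (P : pred {set 'I_N}) (S0 : {set 'I_N})
  (g : {set 'I_N} -> R) :
  \sum_(S | P S) ((S == S0)%:R * g S) = if P S0 then g S0 else 0.
Proof.
rewrite big_mkcond (bigD1 S0) //= big1 ?addr0.
  by case: (P S0); rewrite ?eqxx ?mul1r.
by move=> S /negbTE ->; rewrite mul0r; case: (P S).
Qed.

Lemma expect_const (R : realType) N K (q : {set 'I_N} -> R) c :
  is_dist K q -> expect K q (fun _ => c) = c.
Proof. by move=> [_ [_ H]]; rewrite /expect -big_distrl /= H mul1r. Qed.

Lemma w_ge0 (R : realType) N K (q : {set 'I_N} -> R) i : is_dist K q -> 0 <= w K q i.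
Proof. by move=> [H _]; rewrite /w sumr_ge0. Qed.

Lemma w_le1 (R : realType) N K (q : {set 'I_N} -> R) i : is_dist K q -> w K q i <= 1.
Proof.
move=> [H [_ H1]]; rewrite -H1 /w [X in _ <= X]big_mkcond [X in X <= _]big_mkcond.
apply: ler_sum => S _; case: (assortment K S) => //=; case: (i \in S) => //.
Qed.

Definition mixd (R : realType) N (q : {set 'I_N} -> R) S0 (t : R) :=
  fun S => (1 - t) * q S + t * (S == S0)%:R.

Lemma mixd_dist (R : realType) N K (q : {set 'I_N} -> R) S0 t :
  is_dist K q -> assortment K S0 -> 0 <= t <= 1 -> is_dist K (mixd q S0 t).
Proof.
move=> [H0 [H1 H2]] HS /andP[t0 t1]; split; [|split].
- by move=> S; rewrite /mixd addr_ge0 ?mulr_ge0 ?subr_ge0.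
- move=> S HSn; rewrite /mixd H1 // mulr0 add0r.
  by case: eqP => [E|]; [rewrite E HS in HSn|rewrite mulr0].
- rewrite /mixd big_split /= -mulr_sumr H2 mulr1.
  under [X in _ + X = _]eq_bigr do rewrite mulrC.
  by rewrite (sum_pick (fun S => assortment K S) S0 (fun _ => t)) HS; ring.
Qed.

Lemma mixd_w (R : realType) N K (q : {set 'I_N} -> R) S0 t i :
  assortment K S0 -> w K (mixd q S0 t) i = (1 - t) * w K q i + t * (i \in S0)%:R.
Proof.
move=> HS; rewrite /w /mixd big_split /= -mulr_sumr; congr (_ + _).
under eq_bigr do rewrite mulrC.
rewrite (sum_pick (fun S => assortment K S && (i \in S)) S0 (fun _ => t)) HS /=.
by case: (i \in S0); rewrite ?mulr1 ?mulr0.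
Qed.

Lemma mixd_expect (R : realType) N K (q : {set 'I_N} -> R) S0 t f :
  assortment K S0 -> expect K (mixd q S0 t) f = (1 - t) * expect K q f + t * f S0.
Proof.
move=> HS; rewrite /expect /mixd.
under eq_bigr do rewrite mulrDl.
rewrite big_split /=; congr (_ + _).
  by rewrite mulr_sumr; apply: eq_bigr => S _; rewrite mulrA.
under eq_bigr do rewrite mulrAC mulrC.
by rewrite (sum_pick (fun S => assortment K S) S0 (fun S => t * f S)) HS.
Qed.

Definition cover (R : realType) N : {set 'I_N} -> R :=
  fun S => N%:R^-1 * \sum_(j < N) (S == [set j])%:R.

Arguments cover R N : clear implicits.

Lemma single_assort N K (j : 'I_N) : (1 <= K)%N -> assortment K [set j].
Proof. by move=> HK; rewrite /assortment cards1. Qed.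

Lemma cover_dist (R : realType) N K : (1 <= K)%N -> (0 < N)%N ->
  is_dist K (cover R N) /\ forall i, 0 < w K (cover R N) i.
Proof.
move=> HK HN; have N0 : (0 : R) < N%:R by rewrite ltr0n.
split; [split; [|split]|].
- by move=> S; rewrite /cover mulr_ge0 ?invr_ge0 ?ler0n ?sumr_ge0.
- move=> S HS; rewrite /cover big1 ?mulr0 // => j _.
  by case: eqP => // E; rewrite E single_assort in HS.
- rewrite /cover -mulr_sumr exchange_big /=.
  rewrite (eq_bigr (fun _ => 1)) ?sumr_const ?card_ord ?mulVf ?pnatr_eq0 -?lt0n //.
  move=> j _; rewrite (eq_bigr (fun S => (S == [set j])%:R * 1)); last by move=> S _; rewrite mulr1.
  by rewrite (sum_pick (fun S => assortment K S) [set j] (fun _ => 1)) single_assort.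
- move=> i; rewrite /w /cover -mulr_sumr exchange_big /=.
  apply: mulr_gt0; first by rewrite invr_gt0.
  rewrite (bigD1 i) //= ltr_wpDr ?sumr_ge0 //.
    by move=> j _; apply: sumr_ge0 => S _; apply: ler0n.
  rewrite (eq_bigr (fun S => (S == [set i])%:R * 1)); last by move=> S _; rewrite mulr1.
  by rewrite (sum_pick (fun S => assortment K S && (i \in S)) [set i] (fun _ => 1)) single_assort // set11 ltr01.
Qed.

Lemma argmax_wpos (R : realType) N K gamma (v r : 'I_N -> R) q :
  (1 <= K)%N -> (0 < N)%N -> is_argmax_objective K gamma v r q ->
  forall i, 0 < w K q i.
Proof.
move=> HK HN [Hq Hmax].
have [Hc Hcw] := cover_dist R HK HN.
have := Hmax _ Hc; rewrite /objective.
rewrite (asboolT (Hcw : forall i, 0 < w K (cover R N) i)).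
by case: asboolP.
Qed.


Lemma ln_le_sub1 (R : realType) (y : R) : 0 < y -> ln y <= y - 1.
Proof. move=> y0; have := expR_ge1Dx (ln y); rewrite lnK ?posrE //; lra. Qed.

Lemma ln_diff (R : realType) (a b : R) : 0 < a -> 0 < b ->
  ln (1 / a) - ln (1 / b) <= b / a - 1.
Proof.
move=> a0 b0.
have -> : 1 / a = (b / a) * (1 / b) by field; rewrite ?gt_eqF.
rewrite lnM ?posrE ?divr_gt0 // addrK ln_le_sub1 // divr_gt0 //.
Qed.

Lemma term_bound (R : realType) (x t : R) (b : bool) : 0 < x <= 1 -> 0 < t ->
  2 * t <= x -> t <= 1/2 ->
  ln (1 / ((1 - t) * x + t * b%:R)) - ln (1 / x) <= 2 * t - b%:R * (t / 2 * x^-1).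
Proof.
move=> /andP[x0 x1] t0 tx t12.
have d0 : 0 < (1 - t) * x + t * b%:R.
  by case: b; rewrite /= ?mulr1 ?mulr0 ?addr0; nra.
apply: le_trans (ln_diff d0 x0) _.
case: b d0 => /=; rewrite ?mulr1 ?mulr0 ?addr0 ?mul1r ?mul0r ?subr0 => d0.
- rewrite -subr_ge0.
  have -> : 2 * t - t / 2 * x^-1 - (x / ((1 - t) * x + t) - 1) =
     (t * (2 - x^-1 / 2) * ((1 - t) * x + t) - (x - ((1 - t) * x + t))) / ((1 - t) * x + t).
    by field; rewrite !gt_eqF.
  apply: divr_ge0; last exact: ltW.
  have -> : t * (2 - x^-1 / 2) * ((1 - t) * x + t) - (x - ((1 - t) * x + t)) =
     t * ((2 * ((1 - t) * x + t) + 1 - x) - ((1 - t) * x + t) / (2 * x)).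
    by field; rewrite gt_eqF.
  apply: mulr_ge0; first exact: ltW.
  rewrite subr_ge0 ler_pdivrMr ?mulr_gt0 //; nra.
- rewrite -subr_ge0.
  have -> : 2 * t - (x / ((1 - t) * x) - 1) = t * (1 - 2 * t) / (1 - t).
    by field; rewrite ?gt_eqF //; lra.
  apply: divr_ge0; nra.
Qed.

Lemma opt_cond (R : realType) N K gamma (v r : 'I_N -> R) q S0 :
  0 < gamma -> is_argmax_objective K gamma v r q -> (forall i, 0 < w K q i) ->
  assortment K S0 ->
  Rev S0 v r - expect K q (fun S => Rev S v r)
    + (K.+1%:R ^+ 4 / gamma) / 2 * \sum_(i in S0) (w K q i)^-1
  <= 2 * (K.+1%:R ^+ 4 / gamma) * N%:R.
Proof.
move=> g0 [Hq Hmax] Hw HS.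
set lam := K.+1%:R ^+ 4 / gamma.
have lam0 : 0 < lam by rewrite divr_gt0 // exprn_gt0 // ltr0n.
set s := \sum_(i < N) (w K q i)^-1.
have cs : forall i, (w K q i)^-1 <= s.
  move=> i; rewrite /s (bigD1 i) //= lerDl sumr_ge0 // => j _.
  by rewrite invr_ge0 ltW.
have s0 : 0 <= s by apply: sumr_ge0 => j _; rewrite invr_ge0 ltW.
set t := (2 * (1 + s))^-1.
have t0 : 0 < t by rewrite invr_gt0; lra.
have t12 : t <= 1/2.
  rewrite -subr_ge0 (_ : 1/2 - t = s / (2 * (1 + s))); last by rewrite /t; field; nz.
  by rewrite divr_ge0 //; lra.
have tw : forall i, 2 * t <= w K q i.
  move=> i; have wi := Hw i; have := cs i => ci.
  have e : 2 * t = (1 + s)^-1 by rewrite /t; field; nz.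
  rewrite e -(invrK (w K q i)) lef_pV2 ?posrE ?invr_gt0 //; lra.
have w1 : forall i, w K q i <= 1 by move=> i; apply: w_le1.
have t01 : 0 <= t <= 1 by apply/andP; split; lra.
have Hd := mixd_dist Hq HS t01.
have Hw' : forall i, 0 < w K (mixd q S0 t) i.
  move=> i; rewrite mixd_w //; have := Hw i.
  case: (i \in S0); rewrite /= ?mulr1 ?mulr0; nra.
have := Hmax _ Hd; rewrite /objective (asboolT Hw') (asboolT Hw) lee_fin.
rewrite mixd_expect // -/lam.
set E := expect K q _; set R0 := Rev S0 v r.
move=> H.
have HD : \sum_(i < N) ln (1 / w K (mixd q S0 t) i) - \sum_(i < N) ln (1 / w K q i)
   <= 2 * t * N%:R - t / 2 * \sum_(i in S0) (w K q i)^-1.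
  rewrite -sumrB.
  apply: le_trans (_ : \sum_(i < N) (2 * t - (i \in S0)%:R * (t / 2 * (w K q i)^-1)) <= _).
    apply: ler_sum => i _; rewrite mixd_w //; apply: term_bound => //.
    by rewrite Hw w1.
  rewrite sumrB sumr_const card_ord mulr_natr mulr_sumr.
  rewrite le_eqVlt; apply/orP; left; apply/eqP; congr (_ - _).
  rewrite [RHS]big_mkcond; apply: eq_bigr => i _.
  by case: (i \in S0); rewrite ?mul1r ?mul0r.
have H2 : t * (R0 - E) <= lam * (2 * t * N%:R - t / 2 * \sum_(i in S0) (w K q i)^-1).
  apply: le_trans (_ : lam * (\sum_(i < N) ln (1 / w K (mixd q S0 t) i) - \sum_(i < N) ln (1 / w K q i)) <= _).
    lra.
  by rewrite ler_pM2l.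
have : t * (R0 - E + lam / 2 * \sum_(i in S0) (w K q i)^-1) <= t * (2 * lam * N%:R).
  lra.
by rewrite ler_pM2l.
Qed.


Lemma sumv_bounds (R : realType) N K (v : 'I_N -> R) S :
  in_unit_cube v -> assortment K S ->
  0 <= \sum_(k in S) v k <= K%:R.
Proof.
move=> Hv /andP[_ HK]; apply/andP; split.
  by apply: sumr_ge0 => k _; case/andP: (Hv k).
apply: le_trans (_ : \sum_(k in S) (1 : R) <= _).
  by apply: ler_sum => k _; case/andP: (Hv k).
by rewrite sumr_const ler_nat.
Qed.

Lemma sqdist_ge_i (R : realType) N (S : {set 'I_N}) (v vs : 'I_N -> R) i :
  (mu S v None - mu S vs None) ^+ 2 + (mu S v (Some i) - mu S vs (Some i)) ^+ 2
  <= sqdist_mu S v vs.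
Proof.
rewrite /sqdist_mu sum_option lerD2l (bigD1 i) //= lerDl.
by apply: sumr_ge0 => j _; apply: sqr_ge0.
Qed.

Lemma sqdist_ge_S (R : realType) N (S : {set 'I_N}) (v vs : 'I_N -> R) :
  \sum_(i in S) (mu S v (Some i) - mu S vs (Some i)) ^+ 2 <= sqdist_mu S v vs.
Proof.
rewrite /sqdist_mu sum_option.
apply: le_trans (_ : \sum_(j < N) (mu S v (Some j) - mu S vs (Some j)) ^+ 2 <= _);
  last by rewrite lerDr sqr_ge0.
rewrite [X in X <= _]big_mkcond; apply: ler_sum => j _.
by case: (j \in S) => //; apply: sqr_ge0.
Qed.

Lemma item_bound (R : realType) N K (S : {set 'I_N}) (v vs : 'I_N -> R) i :
  in_unit_cube v -> in_unit_cube vs -> assortment K S -> i \in S ->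
  (v i - vs i) ^+ 2 <= 2 * K.+1%:R ^+ 2 * sqdist_mu S v vs.
Proof.
move=> Hv Hvs HS iS.
apply: le_trans (_ : 2 * K.+1%:R ^+ 2 * ((mu S v None - mu S vs None) ^+ 2 +
   (mu S v (Some i) - mu S vs (Some i)) ^+ 2) <= _); last first.
  by rewrite ler_pM2l ?sqdist_ge_i // mulr_gt0 // exprn_gt0 // ltr0n.
rewrite /mu iS.
have /andP[a0 aK] := sumv_bounds Hv HS.
have /andP[b0 bK] := sumv_bounds Hvs HS.
set A := \sum_(k in S) v k in a0 aK *.
set B := \sum_(k in S) vs k in b0 bK *.
have /andP[vs0 vs1] := Hvs i.
have e : v i - vs i = (1 + A) * (v i / (1 + A) - vs i / (1 + B))
                    - (1 + A) * vs i * (1 / (1 + A) - 1 / (1 + B)).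
  by field; nz.
rewrite e.
set x := v i / (1 + A) - vs i / (1 + B).
set y := 1 / (1 + A) - 1 / (1 + B).
have KS : K.+1%:R = K%:R + 1 :> R by rewrite -natr1.
rewrite KS.
have hA : (1 + A) ^+ 2 <= (K%:R + 1) ^+ 2 by rewrite lerXn2r ?nnegrE; lra.
set p := (1 + A) * x; set q := (1 + A) * vs i * y.
have h1 : (p - q) ^+ 2 <= 2 * (p ^+ 2 + q ^+ 2).
  have := sqr_ge0 (p + q); rewrite !expr2; lra.
have h2 : p ^+ 2 <= (K%:R + 1) ^+ 2 * x ^+ 2.
  by rewrite /p exprMn ler_wpM2r ?sqr_ge0.
have h3 : q ^+ 2 <= (K%:R + 1) ^+ 2 * y ^+ 2.
  rewrite /q !exprMn -mulrA.
  apply: le_trans (_ : (1 + A) ^+ 2 * (1 * y ^+ 2) <= _).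
    by rewrite ler_wpM2l ?sqr_ge0 // ler_wpM2r ?sqr_ge0 // expr_le1.
  by rewrite mul1r ler_wpM2r ?sqr_ge0.
have hK : 0 <= (K%:R + 1 : R) ^+ 2 by apply: sqr_ge0.
rewrite /y /x in h2 h3 *. nra.
Qed.

Lemma rev_lip (R : realType) N (S : {set 'I_N}) (v v' r : 'I_N -> R) :
  in_unit_cube v -> in_unit_cube v' -> in_unit_cube r ->
  Rev S v' r - Rev S v r <= \sum_(i in S) `|v' i - v i|.
Proof.
move=> Hv Hv' Hr; rewrite /Rev.
set P := \sum_(i in S) r i * v i; set P' := \sum_(i in S) r i * v' i.
set A := \sum_(i in S) v i; set A' := \sum_(i in S) v' i.
have A0 : 0 <= A by apply: sumr_ge0 => k _; case/andP: (Hv k).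
have A'0 : 0 <= A' by apply: sumr_ge0 => k _; case/andP: (Hv' k).
have P0 : 0 <= P by apply: sumr_ge0 => k _; case/andP: (Hv k); case/andP: (Hr k); nra.
have PA : P <= A by apply: ler_sum => k _; case/andP: (Hv k); case/andP: (Hr k); nra.
have key : P' * (1 + A) - P * (1 + A') =
   \sum_(i in S) (v' i - v i) * (r i * (1 + A) - P).
  rewrite (eq_bigr (fun i => r i * v' i * (1 + A) - r i * v i * (1 + A) - (v' i * P - v i * P)));
    last by move=> i _; ring.
  rewrite !sumrB -!mulr_suml -/P -/P' -/A' -/A; ring.
have bnd : \sum_(i in S) (v' i - v i) * (r i * (1 + A) - P) <=
           (1 + A) * \sum_(i in S) `|v' i - v i|.
  rewrite mulr_sumr; apply: ler_sum => i _.
  apply: le_trans (ler_norm _) _; rewrite normrM mulrC ler_wpM2r //.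
  case/andP: (Hr i) => r0 r1; rewrite ler_norml; apply/andP; split; nra.
have S0 : 0 <= \sum_(i in S) `|v' i - v i| by apply: sumr_ge0.
rewrite -subr_ge0.
set T := \sum_(i in S) `|v' i - v i| in S0 bnd *.
have -> : T - (P' / (1 + A') - P / (1 + A)) =
   ((1 + A) * T * (1 + A') -
     (P' * (1 + A) - P * (1 + A'))) / ((1 + A) * (1 + A')).
  by field; nz.
apply: divr_ge0; last by apply: mulr_ge0; lra.
rewrite key subr_ge0; apply: (le_trans bnd).
rewrite -{1}(mulr1 ((1 + A) * T)) ler_wpM2l ?mulr_ge0 //; lra.
Qed.

Lemma rev_mu (R : realType) N (S : {set 'I_N}) (v vs r : 'I_N -> R) :
  in_unit_cube r ->
  Rev S v r - Rev S vs r <= \sum_(i in S) `|mu S v (Some i) - mu S vs (Some i)|.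
Proof.
move=> Hr.
have e : forall u, Rev S u r = \sum_(i in S) r i * mu S u (Some i).
  move=> u; rewrite /Rev mulr_suml; apply: eq_bigr => i iS.
  by rewrite /mu iS mulrA.
rewrite !e -sumrB; apply: ler_sum => i _; rewrite -mulrBr.
apply: le_trans (ler_norm _) _; rewrite normrM.
case/andP: (Hr i) => r0 r1.
by rewrite ger0_norm // ler_piMl.
Qed.

Lemma amgm (R : realType) (g x : R) : 0 < g -> x - g / 2 * x ^+ 2 <= 1 / (2 * g).
Proof.
move=> g0; rewrite -subr_ge0.
have -> : 1 / (2 * g) - (x - g / 2 * x ^+ 2) = (g * x - 1) ^+ 2 / (2 * g).
  by field; nz.
by rewrite divr_ge0 ?sqr_ge0 //; lra.
Qed.

Lemma perS_bound (R : realType) N K (S : {set 'I_N}) (v vs r : 'I_N -> R) gamma :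
  0 < gamma -> in_unit_cube r -> assortment K S ->
  Rev S v r - Rev S vs r - gamma / 2 * sqdist_mu S v vs <= K%:R / (2 * gamma).
Proof.
move=> g0 Hr /andP[_ HK].
apply: le_trans (_ : \sum_(i in S) `|mu S v (Some i) - mu S vs (Some i)|
   - gamma / 2 * \sum_(i in S) (mu S v (Some i) - mu S vs (Some i)) ^+ 2 <= _).
  have := @rev_mu R N S v vs r Hr; have := sqdist_ge_S S v vs.
  have : 0 <= gamma / 2 by lra.
  nra.
rewrite mulr_sumr -sumrB.
apply: le_trans (_ : \sum_(i in S) (1 / (2 * gamma)) <= _).
  apply: ler_sum => i _; rewrite -real_normK ?num_real //; exact: amgm.
rewrite sumr_const -[(1 / (2 * gamma)) *+ _]mulr_natl mul1r.
by rewrite ler_pM2r ?invr_gt0 ?ler_nat //; lra.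
Qed.

Lemma sqdist_ge0 (R : realType) N (S : {set 'I_N}) (v vs : 'I_N -> R) :
  0 <= sqdist_mu S v vs.
Proof. by apply: sumr_ge0 => o _; apply: sqr_ge0. Qed.

Lemma expect_le (R : realType) N K (q : {set 'I_N} -> R) f g :
  is_dist K q -> (forall S, assortment K S -> f S <= g S) ->
  expect K q f <= expect K q g.
Proof.
move=> [H0 _] Hfg; apply: ler_sum => S HS; apply: ler_wpM2l => //; exact: Hfg.
Qed.

Lemma expect_lin (R : realType) N K (q : {set 'I_N} -> R) f g h c :
  expect K q (fun S => f S - g S - c * h S) =
  expect K q f - expect K q g - c * expect K q h.
Proof.
rewrite /expect mulr_sumr -!sumrB; apply: eq_bigr => S _; ring.
Qed.

Lemma weighted (R : realType) N K (q : {set 'I_N} -> R) (v vs : 'I_N -> R) i :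
  is_dist K q -> in_unit_cube v -> in_unit_cube vs ->
  w K q i * (v i - vs i) ^+ 2 <=
  2 * K.+1%:R ^+ 2 * expect K q (fun S => sqdist_mu S v vs).
Proof.
move=> Hq Hv Hvs; have [H0 _] := Hq.
rewrite /w /expect mulr_suml mulr_sumr.
apply: le_trans (_ : \sum_(S | assortment K S && (i \in S))
   2 * K.+1%:R ^+ 2 * (q S * sqdist_mu S v vs) <= _).
  apply: ler_sum => S /andP[HS iS].
  rewrite [X in _ <= X]mulrCA ler_wpM2l //; exact: item_bound.
rewrite [X in X <= _]big_mkcond [X in _ <= X]big_mkcond /=.
apply: ler_sum => S _; case: (assortment K S) => //=.
case: (i \in S) => //; rewrite mulr_ge0 ?mulr_ge0 ?sqdist_ge0 ?sqr_ge0 //.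
Qed.

Lemma first_term (R : realType) N K gamma (q : {set 'I_N} -> R) (v vs r : 'I_N -> R) S0 :
  (1 <= K)%N -> 0 < gamma -> is_dist K q -> (forall i, 0 < w K q i) ->
  in_unit_cube v -> in_unit_cube vs -> in_unit_cube r -> assortment K S0 ->
  Rev S0 vs r - Rev S0 v r <=
    (K.+1%:R ^+ 4 / gamma) / 2 * \sum_(i in S0) (w K q i)^-1
    + gamma / 2 * expect K q (fun S => sqdist_mu S v vs).
Proof.
move=> HK g0 Hq Hw Hv Hvs Hr /andP[_ HS].
set lam := K.+1%:R ^+ 4 / gamma.
have k1 : (1 : R) <= K%:R by rewrite ler1n.
have K1pos : (0 : R) < K.+1%:R by rewrite ltr0n.
have lam0 : 0 < lam by rewrite divr_gt0 // exprn_gt0.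
set ED := expect K q _.
have ED0 : 0 <= ED by apply: sumr_ge0 => S _; rewrite mulr_ge0 ?sqdist_ge0 //; case: Hq.
apply: le_trans (rev_lip S0 Hv Hvs Hr) _.
apply: le_trans (_ : \sum_(i in S0) (lam / 2 * (w K q i)^-1 +
    w K q i * (v i - vs i) ^+ 2 / (2 * lam)) <= _).
  apply: ler_sum => i _.
  have wi := Hw i.
  rewrite -subr_ge0 (_ : v i - vs i = - (vs i - v i)) ?sqrrN; last by ring.
  rewrite -real_normK ?num_real //.
  set x := `|vs i - v i|.
  have -> : lam / 2 * (w K q i)^-1 + w K q i * x ^+ 2 / (2 * lam) - x =
     (w K q i * x - lam) ^+ 2 / (2 * lam * w K q i).
    by field; apply/andP; split; rewrite gt_eqF.
  by rewrite divr_ge0 ?sqr_ge0 // ltW // mulr_gt0 // mulr_gt0.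
rewrite big_split /= -mulr_sumr lerD2l.
apply: le_trans (_ : \sum_(i in S0) (2 * K.+1%:R ^+ 2 * ED / (2 * lam)) <= _).
  apply: ler_sum => i _; rewrite ler_pM2r; first exact: weighted.
  by rewrite invr_gt0 mulr_gt0.
rewrite sumr_const -[(_ / (2 * lam)) *+ _]mulr_natl.
have -> : #|S0|%:R * (2 * K.+1%:R ^+ 2 * ED / (2 * lam)) =
    (#|S0|%:R / K.+1%:R ^+ 2) * (gamma * ED).
  rewrite /lam; field; apply/andP; split; rewrite gt_eqF // exprn_gt0 //.
have hx : #|S0|%:R / K.+1%:R ^+ 2 <= 1 / 2 :> R.
  have hS : (#|S0|%:R : R) <= K%:R by rewrite ler_nat.
  rewrite ler_pdivrMr ?exprn_gt0 // -[K.+1%:R]natr1.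
  have : (0 : R) <= #|S0|%:R by rewrite ler0n.
  move=> h0; rewrite expr2; nra.
apply: le_trans (_ : 1 / 2 * (gamma * ED) <= _); last lra.
by rewrite ler_wpM2r // mulr_ge0 // ltW.
Qed.

Unset Implicit Arguments.

Lemma numeric (R : realType) (N K : nat) (gamma : R) :
  (1 <= K)%N -> (K <= N)%N -> 0 < gamma ->
  2 * (K.+1%:R ^+ 4 / gamma) * N%:R + K%:R / (2 * gamma) <=
  64 * N%:R * K%:R ^+ 4 / gamma.
Proof.
move=> HK HKN g0.
have k1 : (1 : R) <= K%:R by rewrite ler1n.
have nk : (K%:R : R) <= N%:R by rewrite ler_nat.
set k := (K%:R : R) in k1 nk *; set n := (N%:R : R) in nk *.
have e : K.+1%:R = k + 1 :> R by rewrite -natr1.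
rewrite e.
have h1 : (k + 1) ^+ 4 <= 16 * k ^+ 4.
  apply: le_trans (_ : (2 * k) ^+ 4 <= _).
    by rewrite lerXn2r ?nnegrE //; lra.
  by rewrite exprMn (_ : (2 : R) ^+ 4 = 16) //; rewrite !exprS expr0; lra.
have h2 : k <= k ^+ 4.
  rewrite -{1}(mulr1 k) exprS ler_wpM2l ?exprn_ege1 //; lra.
have k4 : 0 <= k ^+ 4 by rewrite exprn_ge0 //; lra.
have h1' : (k + 1) ^+ 4 * n <= 16 * k ^+ 4 * n by rewrite ler_wpM2r //; lra.
have h2' : k <= k ^+ 4 * n.
  apply: le_trans h2 _; rewrite -{1}(mulr1 (k ^+ 4)) ler_wpM2l //; lra.
have -> : 2 * ((k + 1) ^+ 4 / gamma) * n + k / (2 * gamma) =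
   (2 * ((k + 1) ^+ 4 * n) + k / 2) / gamma.
  by field; apply/negP => /eqP; lra.
rewrite ler_pM2r ?invr_gt0 //; lra.
Qed.

Theorem theorem4 (R : realType) :
  exists C : R, 0 < C /\
  forall (N K : nat) (gamma : R) (v r : 'I_N -> R) (q : {set 'I_N} -> R),
    (1 <= K)%N -> (K <= N)%N -> 0 < gamma ->
    in_unit_cube v -> in_unit_cube r ->
    is_argmax_objective K gamma v r q ->
    dec K gamma q v r <= C * N%:R * K%:R ^+ 4 / gamma.
Proof.
exists 64; split; first by [].
move=> N K gamma v r q HK HKN g0 Hv Hr Hq.
have HN : (0 < N)%N by apply: leq_trans HK HKN.
have Hw := argmax_wpos HK HN Hq.
have Hd := Hq.1.
rewrite /dec; apply: ge_sup.
  set i0 : 'I_N := Ordinal HN.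
  eexists; exists v, [set i0]; split => //; exact: single_assort.
move=> x [vs [Ss [Hvs HSs ->]]].
have T1 := first_term HK g0 Hd Hw Hv Hvs Hr HSs.
have T2 := opt_cond g0 Hq Hw HSs.
have T3 : expect K q (fun S => Rev S v r) - expect K q (fun S => Rev S vs r)
   - gamma / 2 * expect K q (fun S => sqdist_mu S v vs) <= K%:R / (2 * gamma).
  rewrite -expect_lin.
  rewrite -[X in _ <= X](expect_const (K%:R / (2 * gamma)) Hd).
  by apply: expect_le => // S HS; apply: perS_bound.
apply: le_trans (@numeric R N K gamma HK HKN g0).
lra.
Qed.
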